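(* Let $\lambda\in 5\mathbb{Z}^+$, $r\in\mathbb{Z}^+$, $\mu>0$ and $\sigma>0$ with $\lambda\sigma\in 5\mathbb{N}$, and let $\Lambda$, $\gamma_k$, $\mathbb{W}_k$ be as in the context. For any complex numbers $\{a_k : k\in\Lambda\}$ with $a_{-k} = \overline{a_k}$, the function $$W(t,x) = \sum_{k\in\Lambda} a_k\,\mathbb{W}_k(t,x)$$ is real valued, and for each $\mathring{R}\in\mathring{\mathcal{M}}$, $$\sum_{k\in\Lambda}(\gamma_k(\mathring{R}))^2\,\frac{1}{|\mathbb{T}^2|}\int_{\mathbb{T}^2}\mathbb{W}_k\mathring{\otimes}\mathbb{W}_{-k}\,dx = -\mathring{R}.$$
   Context: $\mathbb{T}^2=\mathbb{R}^2/(2\pi\mathbb{Z}^2)$. $\Lambda^+ = \{\frac15(3e_1\pm4e_2),\frac15(4e_1\pm3e_2)\}$, $\Lambda^- = -\Lambda^+$, $\Lambda=\Lambda^+\cup\Lambda^-$. $\mathring{\mathcal{M}}$ is the space of real symmetric trace-free $2\times2$ matrices, and $f\mathring{\otimes}g = f\otimes g - \frac12 (f\cdot g)\,\mathrm{Id}$ (extended bilinearly to complex vectors). $\{\gamma_k\}_{k\in\Lambda}$ is a family of positive smooth functions on $\mathring{\mathcal{M}}$ with $\gamma_{-k}=\gamma_k$ and $\mathring{R}=\sum_{k\in\Lambda}\gamma_k(\mathring{R})^2\,(k\mathring{\otimes}k)$ for all $\mathring{R}\in\mathring{\mathcal{M}}$. For $k=(k_1,k_2)$, $k^\perp=(-k_2,k_1)$.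 Define $b_k(x) = i k^\perp e^{i\lambda k\cdot x}$. The 2D Dirichlet kernel is $D_r(x) = \frac{1}{2r+1}\sum_{k\in\Omega_r} e^{ik\cdot x}$ with $\Omega_r=\{(k_1,k_2)\in\mathbb{Z}^2 : -r\le k_i\le r\}$. Define $\eta_k(t,x) = D_r(\lambda\sigma(k\cdot x+\mu t),\ \lambda\sigma k^\perp\cdot x)$ for $k\in\Lambda^+$ and $\eta_k = \eta_{-k}$ for $k\in\Lambda^-$, and $\mathbb{W}_k(t,x) = \eta_k(t,x)\,b_k(x)$. *)

(* Defs.v *)
From Stdlib Require Import Reals List ZArith.
From Coquelicot Require Import Coquelicot.
Import ListNotations.
Open Scope R_scope.

Inductive P4 := J1 | J2 | J3 | J4.
(* Lp j ranges over Lambda^+, Lm j = - (Lp j) ranges over Lambda^- *)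
Inductive Lam := Lp (j : P4) | Lm (j : P4).

Definition vecP (j : P4) : R * R :=
  match j with
  | J1 => (3/5, 4/5)
  | J2 => (3/5, -(4/5))
  | J3 => (4/5, 3/5)
  | J4 => (4/5, -(3/5))
  end.

Definition vec (k : Lam) : R * R :=
  match k with
  | Lp j => vecP j
  | Lm j => (- fst (vecP j), - snd (vecP j))
  end.

Definition lneg (k : Lam) : Lam :=
  match k with Lp j => Lm j | Lm j => Lp j end.

Definition all_Lam : list Lam :=
  [Lp J1; Lp J2; Lp J3; Lp J4; Lm J1; Lm J2; Lm J3; Lm J4].

Definition perp (k : R * R) : R * R := (- snd k, fst k).
Definition dot (k x : R * R) : R := fst k * fst x + snd k * snd x.

Record RMat := mkRMat { r11 : R; r12 : R; r21 : R; r22 : R }.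
Definition RMat0 := mkRMat 0 0 0 0.
Definition RMadd (A B : RMat) := mkRMat (r11 A + r11 B) (r12 A + r12 B) (r21 A + r21 B) (r22 A + r22 B).
Definition RMscale (c : R) (A : RMat) := mkRMat (c * r11 A) (c * r12 A) (c * r21 A) (c * r22 A).
Definition RMopp (A : RMat) := RMscale (-1) A.

Definition tracefree_sym (A : RMat) : Prop := r12 A = r21 A /\ r11 A + r22 A = 0.
Definition tfs_of (a b : R) : RMat := mkRMat a b b (- a).

Definition rotimes0 (f g : R * R) : RMat :=
  mkRMat (fst f * fst g - / 2 * dot f g) (fst f * snd g)
         (snd f * fst g) (snd f * snd g - / 2 * dot f g).

Record CMat := mkCMat { c11 : C; c12 : C; c21 : C; c22 : C }.
Definition CMat0 := ( mkCMat 0 0 0 0)%C.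
Definition CMadd (A B : CMat) := ( mkCMat (c11 A + c11 B) (c12 A + c12 B) (c21 A + c21 B) (c22 A + c22 B))%C.
Definition CMscale (c : C) (A : CMat) := ( mkCMat (c * c11 A) (c * c12 A) (c * c21 A) (c * c22 A))%C.
Definition CM_of_RM (A : RMat) := mkCMat (RtoC (r11 A)) (RtoC (r12 A)) (RtoC (r21 A)) (RtoC (r22 A)).

Definition cdot (f g : C * C) : C := ( fst f * fst g + snd f * snd g)%C.
Definition cotimes0 (f g : C * C) : CMat := (
  mkCMat (fst f * fst g - / 2 * cdot f g) (fst f * snd g)
         (snd f * fst g) (snd f * snd g - / 2 * cdot f g))%C.

Definition cexpi (th : R) : C := (cos th, sin th).

Definition bk (lam : R) (k : Lam) (x : R * R) : C * C := (
  let kp := perp (vec k) in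
  let e := cexpi (lam * dot (vec k) x) in
  (Ci * RtoC (fst kp) * e, Ci * RtoC (snd kp) * e))%C.

Definition range_r (r : nat) : list Z :=
  map (fun n => (Z.of_nat n - Z.of_nat r)%Z) (seq 0 (2 * r + 1)).

Definition Csum {A} (f : A -> C) (l : list A) : C := (
  fold_right (fun a acc => f a + acc) 0 l)%C.
Definition CMsum {A} (f : A -> CMat) (l : list A) : CMat := (
  fold_right (fun a acc => CMadd (f a) acc) CMat0 l)%C.
Definition RMsum {A} (f : A -> RMat) (l : list A) : RMat :=
  fold_right (fun a acc => RMadd (f a) acc) RMat0 l.
Definition CVsum {A} (f : A -> C * C) (l : list A) : C * C := (
  fold_right (fun a acc => (fst (f a) + fst acc, snd (f a) + snd acc)) (RtoC 0, RtoC 0) l)%C.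

Definition Dirichlet (r : nat) (y : R * R) : C := (
  RtoC (/ INR (2 * r + 1)) *
  Csum (fun k1 : Z => Csum (fun k2 : Z =>
          cexpi (IZR k1 * fst y + IZR k2 * snd y)) (range_r r)) (range_r r))%C.

(* eta_k(t,x) = D_r(lam sig (k.x + mu t), lam sig k^perp.x) for k in Lambda^+,
   eta_k = eta_{-k} for k in Lambda^- *)
Definition eta (lam sig mu : R) (r : nat) (k : Lam) (t : R) (x : R * R) : C :=
  let kp := match k with Lp j => vecP j | Lm j => vecP j end in
  Dirichlet r (lam * sig * (dot kp x + mu * t), lam * sig * dot (perp kp) x).

Definition Wk (lam sig mu : R) (r : nat) (k : Lam) (t : R) (x : R * R) : C * C := (
  let e := eta lam sig mu r k t x in
  let b := bk lam k x in
  (e * fst b, e * snd b))%C.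

Definition Wsum (a : Lam -> C) (lam sig mu : R) (r : nat) (t : R) (x : R * R) : C * C := (
  CVsum (fun k => let w := Wk lam sig mu r k t x in (a k * fst w, a k * snd w)) all_Lam)%C.

(* ---------- averages over T^2 = R^2/(2 pi Z^2), fundamental domain [0,2pi]^2 ---------- *)
Definition CInt2 (f : R -> R -> C) : C :=
  @RInt C_R_CompleteNormedModule
    (fun x1 => @RInt C_R_CompleteNormedModule (fun x2 => f x1 x2) 0 (2 * PI)) 0 (2 * PI).

Definition avgT2 (F : R * R -> CMat) : CMat :=
  CMscale (RtoC (/ (2 * PI * (2 * PI))))
    (mkCMat (CInt2 (fun x1 x2 => c11 (F (x1, x2)))) (CInt2 (fun x1 x2 => c12 (F (x1, x2))))
            (CInt2 (fun x1 x2 => c21 (F (x1, x2)))) (CInt2 (fun x1 x2 => c22 (F (x1, x2))))).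

Inductive partials (f : R -> R -> R) : (R -> R -> R) -> Prop :=
  | part0 : partials f f
  | part1 g : partials f g -> partials f (fun x y => Derive (fun x' => g x' y) x)
  | part2 g : partials f g -> partials f (fun x y => Derive (fun y' => g x y') y).

Definition smooth2 (f : R -> R -> R) : Prop :=
  forall g, partials f g ->
    (forall x y, ex_derive (fun x' => g x' y) x /\ ex_derive (fun y' => g x y') y) /\
    (forall x y, continuity_2d_pt g x y).

(* Main.v *)
Require Import Defs.
From Stdlib Require Import Reals List ZArith Lra Lia FunctionalExtensionality Permutation.
From Coquelicot Require Import Coquelicot.
Import ListNotations.
Open Scope R_scope.

Lemma sin_periodZ : forall x (z : Z), sin (x + 2 * IZR z * PI) = sin x.
Proof.
  intros x z. destruct (Z_le_gt_dec 0 z) as [H|H].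
  - rewrite <- (Z2Nat.id z H), <- INR_IZR_INZ. apply sin_period.
  - replace z with (- Z.of_nat (Z.to_nat (- z)))%Z by lia.
    rewrite opp_IZR, <- INR_IZR_INZ.
    set (n := Z.to_nat (-z)).
    rewrite <- (sin_period (x + 2 * - INR n * PI) n). f_equal. ring.
Qed.

Lemma cos_periodZ : forall x (z : Z), cos (x + 2 * IZR z * PI) = cos x.
Proof.
  intros x z. rewrite <- !sin_shift.
  replace (PI / 2 - (x + 2 * IZR z * PI)) with ((PI/2 - x) + 2 * IZR (-z) * PI) by (rewrite opp_IZR; ring).
  apply sin_periodZ.
Qed.

Lemma cexpi_add : forall a b, (cexpi a * cexpi b = cexpi (a + b))%C.
Proof.
  intros. unfold cexpi, Cmult. simpl. rewrite cos_plus, sin_plus.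
  apply injective_projections; simpl; ring.
Qed.

Lemma cexpi_0 : cexpi 0 = RtoC 1.
Proof. unfold cexpi. rewrite cos_0, sin_0. reflexivity. Qed.

Lemma scal_RtoC : forall (r : R) (c : C), @scal R_Ring C_R_ModuleSpace r c = (RtoC r * c)%C.
Proof.
  intros r [a b]. unfold RtoC, Cmult. simpl. unfold scal; simpl. unfold prod_scal; simpl.
  unfold scal; simpl. unfold mult; simpl. apply injective_projections; simpl; ring.
Qed.

Lemma is_RInt_Cmult : forall (f : R -> C) a b (l : C) (c : C),
  is_RInt f a b l -> is_RInt (fun x => (c * f x)%C) a b (c * l)%C.
Proof.
  intros f a b l [c1 c2] H.
  apply (is_RInt_ext (fun x => (c1 * fst (f x) - c2 * snd (f x), c1 * snd (f x) + c2 * fst (f x)))).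
  { intros x _. destruct (f x) as [u v]. unfold Cmult. simpl. reflexivity. }
  replace ((c1, c2) * l)%C with (c1 * fst l - c2 * snd l, c1 * snd l + c2 * fst l).
  2:{ destruct l. reflexivity. }
  apply (is_RInt_fct_extend_pair (U:=R_NormedModule) (V:=R_NormedModule)
          (fun x => (c1 * fst (f x) - c2 * snd (f x), c1 * snd (f x) + c2 * fst (f x)))); simpl.
  - apply (is_RInt_minus (V:=R_NormedModule)).
    + apply (is_RInt_scal (V:=R_NormedModule) (fun x => fst (f x)) a b c1).
      apply (is_RInt_fct_extend_fst (U:=R_NormedModule) (V:=R_NormedModule)). exact H.
    + apply (is_RInt_scal (V:=R_NormedModule) (fun x => snd (f x)) a b c2).
      apply (is_RInt_fct_extend_snd (U:=R_NormedModule) (V:=R_NormedModule)). exact H.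
  - apply (is_RInt_plus (V:=R_NormedModule)).
    + apply (is_RInt_scal (V:=R_NormedModule) (fun x => snd (f x)) a b c1).
      apply (is_RInt_fct_extend_snd (U:=R_NormedModule) (V:=R_NormedModule)). exact H.
    + apply (is_RInt_scal (V:=R_NormedModule) (fun x => fst (f x)) a b c2).
      apply (is_RInt_fct_extend_fst (U:=R_NormedModule) (V:=R_NormedModule)). exact H.
Qed.

Lemma is_RInt_val : forall {V : NormedModule R_AbsRing} (f : R -> V) a b l l', l = l' -> is_RInt f a b l -> is_RInt f a b l'.
Proof. intros; subst; auto. Qed.

Lemma int1_nz : forall (B E : R), (exists b, B = IZR b) -> B <> 0 ->
  is_RInt (fun x => cexpi (B * x + E)) 0 (2 * PI) (RtoC 0).
Proof.
  intros B E [b Hb] HB.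
  apply (is_RInt_fct_extend_pair (U:=R_NormedModule) (V:=R_NormedModule) (fun x => cexpi (B * x + E))); simpl.
  - assert (H := is_RInt_derive (V:=R_CompleteNormedModule) (fun x => sin (B * x + E) / B) (fun x => cos (B * x + E)) 0 (2*PI)).
    apply (is_RInt_val _ _ _ (minus (sin (B * (2*PI) + E) / B) (sin (B * 0 + E) / B))).
    2:{ apply H.
      * intros x _. auto_derive; auto. field. auto.
      * intros x _. apply continuity_pt_filterlim. apply continuity_pt_comp with (f1 := fun x => B * x + E) (f2 := cos).
        -- apply derivable_continuous_pt. reg.
        -- apply derivable_continuous_pt. reg. }
    unfold minus, plus, opp; simpl. replace (B * (2*PI) + E) with (E + 2 * IZR b * PI) by (subst; ring).
      rewrite sin_periodZ. replace (B * 0 + E) with E by ring. field. auto.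
  - assert (H := is_RInt_derive (V:=R_CompleteNormedModule) (fun x => - cos (B * x + E) / B) (fun x => sin (B * x + E)) 0 (2*PI)).
    apply (is_RInt_val _ _ _ (minus (- cos (B * (2*PI) + E) / B) (- cos (B * 0 + E) / B))).
    2:{ apply H.
      * intros x _. auto_derive; auto. field. auto.
      * intros x _. apply continuity_pt_filterlim. apply continuity_pt_comp with (f1 := fun x => B * x + E) (f2 := sin).
        -- apply derivable_continuous_pt. reg.
        -- apply derivable_continuous_pt. reg. }
    unfold minus, plus, opp; simpl. replace (B * (2*PI) + E) with (E + 2 * IZR b * PI) by (subst; ring).
      rewrite cos_periodZ. replace (B * 0 + E) with E by ring.
      field. auto.
Qed.
Lemma scal_C : forall (r : R) (c w : C), (RtoC r * c)%C = w -> @scal R_Ring C_R_ModuleSpace r c = w.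
Proof. intros r c w H. rewrite scal_RtoC. exact H. Qed.

Definition has2 (f : R -> R -> C) (v : C) : Prop :=
  exists g : R -> C, (forall x1, is_RInt (fun x2 => f x1 x2) 0 (2 * PI) (g x1)) /\
                     is_RInt g 0 (2 * PI) v.

Lemma has2_CInt2 : forall f v, has2 f v -> CInt2 f = v.
Proof.
  intros f v [g [H1 H2]]. unfold CInt2.
  rewrite (RInt_ext (V:=C_R_CompleteNormedModule) _ g).
  - apply (is_RInt_unique (V:=C_R_CompleteNormedModule)). exact H2.
  - intros x _. apply (is_RInt_unique (V:=C_R_CompleteNormedModule)). apply H1.
Qed.

Lemma has2_ext : forall f g v, (forall x1 x2, f x1 x2 = g x1 x2) -> has2 g v -> has2 f v.
Proof.
  intros f g v H Hg. replace f with g; auto.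
  extensionality x1. extensionality x2. auto.
Qed.

Lemma has2_val : forall f v w, v = w -> has2 f v -> has2 f w.
Proof. intros; subst; auto. Qed.

Lemma has2_plus : forall f g v w, has2 f v -> has2 g w ->
  has2 (fun x1 x2 => (f x1 x2 + g x1 x2)%C) (v + w)%C.
Proof.
  intros f g v w [gf [Hf1 Hf2]] [gg [Hg1 Hg2]].
  exists (fun x => (gf x + gg x)%C). split.
  - intros x1. apply (is_RInt_plus (V:=C_R_NormedModule) (fun x2 => f x1 x2) (fun x2 => g x1 x2)); auto.
  - apply (is_RInt_plus (V:=C_R_NormedModule) gf gg); auto.
Qed.

Lemma has2_Cmult : forall f v c, has2 f v -> has2 (fun x1 x2 => (c * f x1 x2)%C) (c * v)%C.
Proof.
  intros f v c [g [H1 H2]]. exists (fun x => (c * g x)%C). split.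
  - intros x1. apply is_RInt_Cmult. auto.
  - apply is_RInt_Cmult. auto.
Qed.

Lemma has2_zero : has2 (fun _ _ => RtoC 0) (RtoC 0).
Proof.
  exists (fun _ => RtoC 0). split.
  - intros x1. apply (is_RInt_val (V:=C_R_NormedModule) _ _ _ (scal (2*PI - 0) (RtoC 0))).
    + apply scal_C. ring.
    + apply (is_RInt_const (V:=C_R_NormedModule)).
  - apply (is_RInt_val (V:=C_R_NormedModule) _ _ _ (scal (2*PI - 0) (RtoC 0))).
    + apply scal_C. ring.
    + apply (is_RInt_const (V:=C_R_NormedModule)).
Qed.

Lemma has2_Csum : forall {A} (l : list A) (f : A -> R -> R -> C) (v : A -> C),
  (forall i, In i l -> has2 (f i) (v i)) ->
  has2 (fun x1 x2 => Csum (fun i => f i x1 x2) l) (Csum v l).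
Proof.
  induction l as [|a l IH]; intros f v H; simpl.
  - apply has2_zero.
  - apply (has2_plus (f a) (fun x1 x2 => Csum (fun i => f i x1 x2) l)).
    + apply H. left; auto.
    + apply IH. intros; apply H; right; auto.
Qed.

Lemma has2_exp_zero : forall A B D, A = 0 -> B = 0 ->
  has2 (fun x1 x2 => cexpi (A * x1 + B * x2 + D)) (RtoC (2 * PI * (2 * PI)) * cexpi D)%C.
Proof.
  intros A B D HA HB. subst.
  exists (fun _ => RtoC (2*PI) * cexpi D)%C. split.
  - intros x1. apply (is_RInt_ext (fun _ => cexpi D)).
    { intros. f_equal. ring. }
    apply (is_RInt_val (V:=C_R_NormedModule) _ _ _ (scal (2*PI - 0) (cexpi D))).
    + apply scal_C. f_equal. f_equal. ring.
    + apply (is_RInt_const (V:=C_R_NormedModule)).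
  - apply (is_RInt_val (V:=C_R_NormedModule) _ _ _ (scal (2*PI - 0) (RtoC (2*PI) * cexpi D)%C)).
    + apply scal_C. replace (2*PI - 0) with (2*PI) by ring. rewrite (RtoC_mult (2*PI) (2*PI)). ring.
    + apply (is_RInt_const (V:=C_R_NormedModule)).
Qed.

Lemma has2_exp_nz : forall A B D, (exists a, A = IZR a) -> (exists b, B = IZR b) ->
  ~ (A = 0 /\ B = 0) ->
  has2 (fun x1 x2 => cexpi (A * x1 + B * x2 + D)) (RtoC 0).
Proof.
  intros A B D HA HB HAB.
  destruct (Req_dec B 0) as [HB0|HB0].
  - assert (HA0 : A <> 0) by tauto.
    exists (fun x1 => RtoC (2*PI) * cexpi (A * x1 + D))%C. split.
    + intros x1. apply (is_RInt_ext (fun _ => cexpi (A * x1 + D))).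
      { intros. f_equal. subst; ring. }
      apply (is_RInt_val (V:=C_R_NormedModule) _ _ _ (scal (2*PI - 0) (cexpi (A * x1 + D)))).
      * apply scal_C. f_equal. f_equal. ring.
      * apply (is_RInt_const (V:=C_R_NormedModule)).
    + apply (is_RInt_val (V:=C_R_NormedModule) _ _ _ (RtoC (2*PI) * RtoC 0)%C).
      * change (@eq C (RtoC (2*PI) * RtoC 0)%C (RtoC 0)); ring.
      * apply is_RInt_Cmult. apply int1_nz; auto.
  - exists (fun _ => RtoC 0). split.
    + intros x1. apply (is_RInt_ext (fun x2 => cexpi (B * x2 + (A * x1 + D)))).
      { intros. f_equal. ring. }
      apply int1_nz; auto.
    + apply (is_RInt_val (V:=C_R_NormedModule) _ _ _ (scal (2*PI - 0) (RtoC 0))).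
      * apply scal_C. ring.
      * apply (is_RInt_const (V:=C_R_NormedModule)).
Qed.

Lemma Csum_ext : forall {A} (l : list A) f g, (forall i, In i l -> f i = g i) -> Csum f l = Csum g l.
Proof.
  induction l as [|a l IH]; intros f g H; simpl; auto.
  rewrite H by (left; auto). rewrite (IH f g) by (intros; apply H; right; auto). reflexivity.
Qed.

Lemma Csum_mult_l : forall {A} (l : list A) f c, (c * Csum f l = Csum (fun i => c * f i) l)%C.
Proof. induction l as [|a l IH]; intros; simpl. ring. rewrite <- IH. ring. Qed.

Lemma Csum_mult_r : forall {A} (l : list A) f c, (Csum f l * c = Csum (fun i => f i * c) l)%C.
Proof. induction l as [|a l IH]; intros; simpl. ring. rewrite <- IH. ring. Qed.

Lemma Csum_prod : forall {A B} (l1 : list A) (l2 : list B) f g,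
  (Csum f l1 * Csum g l2 = Csum (fun i => Csum (fun j => f i * g j) l2) l1)%C.
Proof.
  induction l1 as [|a l IH]; intros; simpl. ring.
  rewrite <- IH, <- Csum_mult_l. ring.
Qed.

Lemma Csum_const : forall {A} (l : list A) c, Csum (fun _ => c) l = (RtoC (INR (length l)) * c)%C.
Proof.
  induction l as [|a l IH]; intros.
  - simpl. unfold RtoC. apply injective_projections; simpl; ring.
  - change (Csum (fun _ => c) (a :: l)) with (c + Csum (fun _ => c) l)%C.
    rewrite IH. change (length (a :: l)) with (S (length l)). rewrite S_INR.
    rewrite RtoC_plus. ring.
Qed.

Lemma Csum_zero : forall {A} (l : list A) f, (forall i, In i l -> f i = RtoC 0) -> Csum f l = RtoC 0.
Proof.
  induction l as [|a l IH]; intros f H; simpl; auto.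
  rewrite H by (left; auto). rewrite IH by (intros; apply H; right; auto). ring.
Qed.

Lemma Csum_sel : forall {A} (l : list A) (P : A -> bool) z X, NoDup l -> In z l ->
  (forall i, In i l -> (P i = true <-> i = z)) ->
  Csum (fun i => if P i then X else RtoC 0) l = X.
Proof.
  induction l as [|a l IH]; intros P z X Hnd Hin HP; simpl. destruct Hin.
  inversion Hnd; subst.
  destruct Hin as [Ha|Hin].
  - subst. assert (P z = true) by (apply HP; simpl; auto). rewrite H.
    rewrite Csum_zero. ring.
    intros i Hi. destruct (P i) eqn:E; auto.
    apply HP in E; [subst; contradiction | right; auto].
  - assert (P a = false). { destruct (P a) eqn:E; auto. apply HP in E; [subst; contradiction | left; auto]. }
    rewrite H. rewrite (IH P z X); auto. ring.
    intros; apply HP; right; auto.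
Qed.

Lemma Csum_perm : forall {A} (l l' : list A) f, Permutation l l' -> Csum f l = Csum f l'.
Proof.
  intros A l l' f H. induction H; simpl; auto.
  - rewrite IHPermutation; auto.
  - ring.
  - congruence.
Qed.

Lemma Csum_map : forall {A B} (l : list A) (h : A -> B) f, Csum f (map h l) = Csum (fun i => f (h i)) l.
Proof. induction l; intros; simpl; auto. rewrite IHl. auto. Qed.

Lemma Csum_conj : forall {A} (l : list A) f, Cconj (Csum f l) = Csum (fun i => Cconj (f i)) l.
Proof.
  induction l; intros; simpl.
  - unfold Cconj, RtoC; simpl. apply injective_projections; simpl; ring.
  - rewrite Cplus_conj, IHl. auto.
Qed.

Lemma in_range : forall r k, In k (range_r r) <-> (- Z.of_nat r <= k <= Z.of_nat r)%Z.
Proof.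
  intros r k. unfold range_r. rewrite in_map_iff. split.
  - intros [n [Hn Hin]]. apply in_seq in Hin. lia.
  - intros H. exists (Z.to_nat (k + Z.of_nat r)). split; [lia | apply in_seq; lia].
Qed.

Lemma range_NoDup : forall r, NoDup (range_r r).
Proof.
  intros r. unfold range_r. apply FinFun.Injective_map_NoDup; [intros a b H; lia | apply seq_NoDup].
Qed.

Lemma range_length : forall r, length (range_r r) = (2 * r + 1)%nat.
Proof. intros. unfold range_r. rewrite length_map, length_seq. auto. Qed.

Lemma Csum_range_opp : forall r g, Csum (fun k => g (- k)%Z) (range_r r) = Csum g (range_r r).
Proof.
  intros r g. rewrite <- (Csum_map _ Z.opp g). apply Csum_perm.
  apply NoDup_Permutation.
  - apply FinFun.Injective_map_NoDup; [intros a b H; lia | apply range_NoDup].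
  - apply range_NoDup.
  - intros x. rewrite in_map_iff, in_range. split.
    + intros [y [Hy Hin]]. apply in_range in Hin. lia.
    + intros H. exists (-x)%Z. split; [lia|]. apply in_range. lia.
Qed.

Lemma Csum_range_sel : forall r k X, In k (range_r r) ->
  Csum (fun l => if Z.eqb (k + l) 0 then X else RtoC 0) (range_r r) = X.
Proof.
  intros r k X Hk. apply (Csum_sel _ _ (-k)%Z); auto using range_NoDup.
  - apply in_range. apply in_range in Hk. lia.
  - intros i _. rewrite Z.eqb_eq. lia.
Qed.

Lemma term_has2 : forall (s mu t p q : R) (P Q : Z) (m0 : nat) (K0 : C) (k1 l1 k2 l2 : Z),
  s = 5 * INR m0 -> s <> 0 -> p = IZR P / 5 -> q = IZR Q / 5 -> p * p + q * q = 1 ->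
  has2 (fun x1 x2 => (K0 * cexpi (s * ((IZR k1 + IZR l1) * p - (IZR k2 + IZR l2) * q) * x1
                                  + s * ((IZR k1 + IZR l1) * q + (IZR k2 + IZR l2) * p) * x2
                                  + (IZR k1 + IZR l1) * s * mu * t))%C)
       (if Z.eqb (k1 + l1) 0 then (if Z.eqb (k2 + l2) 0 then (K0 * RtoC (2 * PI * (2 * PI)))%C else RtoC 0) else RtoC 0).
Proof.
  intros s mu t p q P Q m0 K0 k1 l1 k2 l2 Hs Hs0 Hp Hq Hpq.
  assert (Hnz : ~ (IZR k1 + IZR l1 = 0 /\ IZR k2 + IZR l2 = 0) ->
     has2 (fun x1 x2 => (K0 * cexpi (s * ((IZR k1 + IZR l1) * p - (IZR k2 + IZR l2) * q) * x1
                                  + s * ((IZR k1 + IZR l1) * q + (IZR k2 + IZR l2) * p) * x2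
                                  + (IZR k1 + IZR l1) * s * mu * t))%C) (RtoC 0)).
  { intros Hne. apply (has2_val _ (K0 * RtoC 0)%C). { change (@eq C (K0 * RtoC 0)%C (RtoC 0)); ring. }
    apply has2_Cmult. apply has2_exp_nz.
    - exists (Z.of_nat m0 * ((k1 + l1) * P - (k2 + l2) * Q))%Z.
      rewrite mult_IZR, minus_IZR, !mult_IZR, !plus_IZR, <- INR_IZR_INZ. subst s p q. field.
    - exists (Z.of_nat m0 * ((k1 + l1) * Q + (k2 + l2) * P))%Z.
      rewrite mult_IZR, plus_IZR, !mult_IZR, !plus_IZR, <- INR_IZR_INZ. subst s p q. field.
    - intros [HA HB]. apply Hne.
      set (u := IZR k1 + IZR l1) in *. set (v := IZR k2 + IZR l2) in *.
      assert (h1 : u * p - v * q = 0).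
      { apply Rmult_integral in HA. destruct HA; [contradiction | assumption]. }
      assert (h2 : u * q + v * p = 0).
      { apply Rmult_integral in HB. destruct HB; [contradiction | assumption]. }
      split.
      + transitivity ((u * p - v * q) * p + (u * q + v * p) * q).
        * transitivity (u * (p * p + q * q)); [rewrite Hpq; ring | ring].
        * rewrite h1, h2. ring.
      + transitivity (- (u * p - v * q) * q + (u * q + v * p) * p).
        * transitivity (v * (p * p + q * q)); [rewrite Hpq; ring | ring].
        * rewrite h1, h2. ring. }
  destruct (Z.eqb_spec (k1 + l1) 0) as [E1|E1].
  - assert (Hu : IZR k1 + IZR l1 = 0) by (rewrite <- plus_IZR, E1; reflexivity).
    destruct (Z.eqb_spec (k2 + l2) 0) as [E2|E2].
    + assert (Hv : IZR k2 + IZR l2 = 0) by (rewrite <- plus_IZR, E2; reflexivity).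
      rewrite Hu, Hv.
      apply (has2_val _ (K0 * (RtoC (2 * PI * (2 * PI)) * cexpi (0 * s * mu * t)))%C).
      { replace (0 * s * mu * t) with 0 by ring. rewrite cexpi_0. ring. }
      apply has2_Cmult. apply has2_exp_zero; ring.
    + apply Hnz. intros [_ H]. apply E2. apply eq_IZR. rewrite plus_IZR. exact H.
  - apply Hnz. intros [H _]. apply E1. apply eq_IZR. rewrite plus_IZR. exact H.
Qed.

Lemma eta2_has2 : forall (r : nat) (s mu t p q : R) (P Q : Z) (m0 : nat) (cm : C),
  s = 5 * INR m0 -> s <> 0 -> p = IZR P / 5 -> q = IZR Q / 5 -> p * p + q * q = 1 ->
  has2 (fun x1 x2 => (Dirichlet r ((s * (p * x1 + q * x2 + mu * t))%R, (s * (- q * x1 + p * x2))%R) *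
                      Dirichlet r ((s * (p * x1 + q * x2 + mu * t))%R, (s * (- q * x1 + p * x2))%R) * cm)%C)
       (RtoC (2 * PI * (2 * PI)) * cm)%C.
Proof.
  intros r s mu t p q P Q m0 cm Hs Hs0 Hp Hq Hpq.
  set (c0 := RtoC (/ INR (2 * r + 1))).
  set (K0 := (c0 * c0 * cm)%C).
  set (Rg := range_r r).
  set (K := (K0 * RtoC (2 * PI * (2 * PI)))%C).
  apply (has2_val _ (Csum (fun k1 => Csum (fun l1 => Csum (fun k2 => Csum (fun l2 =>
      if Z.eqb (k1 + l1) 0 then (if Z.eqb (k2 + l2) 0 then K else RtoC 0) else RtoC 0) Rg) Rg) Rg) Rg)).
  { transitivity (Csum (fun k1 => RtoC (INR (2 * r + 1)) * K) Rg)%C.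
    - apply Csum_ext. intros k1 Hk1.
      transitivity (Csum (fun l1 => if Z.eqb (k1 + l1) 0 then (RtoC (INR (2 * r + 1)) * K)%C else RtoC 0) Rg).
      + apply Csum_ext. intros l1 Hl1. destruct (Z.eqb (k1 + l1) 0).
        * rewrite <- (range_length r). fold Rg. rewrite <- Csum_const.
          apply Csum_ext. intros k2 Hk2. apply Csum_range_sel. exact Hk2.
        * apply Csum_zero. intros. apply Csum_zero. auto.
      + apply Csum_range_sel. exact Hk1.
    - rewrite Csum_const. unfold Rg. rewrite range_length.
      unfold K, K0, c0. set (N := INR (2 * r + 1)).
      assert (HN : N <> 0) by (unfold N; apply not_0_INR; lia).
      transitivity (RtoC (N * / N) * RtoC (N * / N) * (RtoC (2 * PI * (2 * PI)) * cm))%C.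
      + rewrite !(RtoC_mult N (/ N)). ring.
      + rewrite Rinv_r by exact HN. change (@eq C (RtoC 1 * RtoC 1 * (RtoC (2 * PI * (2 * PI)) * cm))%C (RtoC (2 * PI * (2 * PI)) * cm)%C). ring. }
  apply (has2_ext _ (fun x1 x2 => Csum (fun k1 => Csum (fun l1 => Csum (fun k2 => Csum (fun l2 =>
      (K0 * cexpi (s * ((IZR k1 + IZR l1) * p - (IZR k2 + IZR l2) * q) * x1
                                  + s * ((IZR k1 + IZR l1) * q + (IZR k2 + IZR l2) * p) * x2
                                  + (IZR k1 + IZR l1) * s * mu * t))%C) Rg) Rg) Rg) Rg)).
  - intros x1 x2. unfold Dirichlet. fold c0. fold Rg.
    set (S := Csum _ Rg).
    transitivity (K0 * (S * S))%C. { unfold K0. ring. }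
    unfold S. rewrite Csum_prod. rewrite Csum_mult_l. apply Csum_ext. intros k1 _.
    rewrite Csum_mult_l. apply Csum_ext. intros l1 _.
    rewrite Csum_prod. rewrite Csum_mult_l. apply Csum_ext. intros k2 _.
    rewrite Csum_mult_l. apply Csum_ext. intros l2 _.
    rewrite cexpi_add. f_equal. f_equal. simpl. ring.
  - apply has2_Csum. intros k1 _. apply has2_Csum. intros l1 _.
    apply has2_Csum. intros k2 _. apply has2_Csum. intros l2 _.
    apply (term_has2 s mu t p q P Q m0); auto.
Qed.

Lemma conj_real : forall S : C, Cconj S = S -> Im S = 0.
Proof.
  intros [a b] H. unfold Cconj in H. simpl in H. injection H. simpl. lra.
Qed.

Lemma C_real : forall z : C, Im z = 0 -> z = RtoC (Re z).
Proof. intros [a b] H. simpl in H. subst. reflexivity. Qed.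

Lemma Dirichlet_real : forall r y, Im (Dirichlet r y) = 0.
Proof.
  intros r y. unfold Dirichlet. rewrite im_scal_l.
  replace (Im _) with 0. ring. symmetry. apply conj_real.
  rewrite Csum_conj.
  transitivity (Csum (fun k1 => Csum (fun k2 => cexpi (IZR (-k1) * fst y + IZR (-k2) * snd y)) (range_r r)) (range_r r)).
  - apply Csum_ext; intros k1 _. rewrite Csum_conj. apply Csum_ext; intros k2 _.
    unfold cexpi, Cconj; simpl. rewrite !opp_IZR.
    replace (- IZR k1 * fst y + - IZR k2 * snd y) with (-(IZR k1 * fst y + IZR k2 * snd y)) by ring.
    rewrite cos_neg, sin_neg. reflexivity.
  - rewrite <- (Csum_range_opp r (fun k1 => Csum (fun k2 => cexpi (IZR k1 * fst y + IZR k2 * snd y)) (range_r r))).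
    apply Csum_ext; intros k1 _. cbv beta.
    rewrite <- (Csum_range_opp r (fun k2 => cexpi (IZR (- k1) * fst y + IZR k2 * snd y))).
    reflexivity.
Qed.

Lemma eta_real : forall lam sig mu r k t x, eta lam sig mu r k t x = RtoC (Re (eta lam sig mu r k t x)).
Proof. intros. apply C_real. unfold eta. apply Dirichlet_real. Qed.

Lemma pair_real : forall (a : C) (e A A' th th' : R), A' = - A -> th' = - th ->
  Im (a * (RtoC e * (Ci * RtoC A * cexpi th)) + Cconj a * (RtoC e * (Ci * RtoC A' * cexpi th')))%C = 0.
Proof.
  intros [a1 a2] e A A' th th' H1 H2. subst.
  unfold cexpi, Cconj, Ci, RtoC, Cmult, Cplus; simpl. rewrite cos_neg, sin_neg. ring.
Qed.

Lemma Im_plus : forall u v : C, Im (u + v)%C = Im u + Im v.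
Proof. intros [] []. reflexivity. Qed.

Lemma part1 : forall lam sig mu r (a : Lam -> C), (forall k, a (lneg k) = Cconj (a k)) ->
     forall t x, Im (fst (Wsum a lam sig mu r t x)) = 0 /\
                 Im (snd (Wsum a lam sig mu r t x)) = 0.
Proof.
  intros lam sig mu r a Ha t x.
  assert (Hf : forall j, Im (a (Lp j) * fst (Wk lam sig mu r (Lp j) t x) + a (Lm j) * fst (Wk lam sig mu r (Lm j) t x))%C = 0).
  { intros j. change (a (Lm j)) with (a (lneg (Lp j))). rewrite (Ha (Lp j)). unfold Wk, bk. cbv zeta. cbn [fst snd].
    change (eta lam sig mu r (Lm j) t x) with (eta lam sig mu r (Lp j) t x).
    rewrite (eta_real lam sig mu r (Lp j) t x).
    apply pair_real.
    - unfold perp, vec; simpl. ring.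
    - unfold dot, vec; simpl. ring. }
  assert (Hs : forall j, Im (a (Lp j) * snd (Wk lam sig mu r (Lp j) t x) + a (Lm j) * snd (Wk lam sig mu r (Lm j) t x))%C = 0).
  { intros j. change (a (Lm j)) with (a (lneg (Lp j))). rewrite (Ha (Lp j)). unfold Wk, bk. cbv zeta. cbn [fst snd].
    change (eta lam sig mu r (Lm j) t x) with (eta lam sig mu r (Lp j) t x).
    rewrite (eta_real lam sig mu r (Lp j) t x).
    apply pair_real.
    - unfold perp, vec; simpl. ring.
    - unfold dot, vec; simpl. ring. }
  unfold Wsum, CVsum, all_Lam. cbn [fold_right fst snd]. split.
  - match goal with |- Im ?z = 0 => replace z with
      ((a (Lp J1) * fst (Wk lam sig mu r (Lp J1) t x) + a (Lm J1) * fst (Wk lam sig mu r (Lm J1) t x))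
     + (a (Lp J2) * fst (Wk lam sig mu r (Lp J2) t x) + a (Lm J2) * fst (Wk lam sig mu r (Lm J2) t x))
     + (a (Lp J3) * fst (Wk lam sig mu r (Lp J3) t x) + a (Lm J3) * fst (Wk lam sig mu r (Lm J3) t x))
     + (a (Lp J4) * fst (Wk lam sig mu r (Lp J4) t x) + a (Lm J4) * fst (Wk lam sig mu r (Lm J4) t x)))%C by ring end.
    pose proof (Hf J1) as H1; pose proof (Hf J2) as H2; pose proof (Hf J3) as H3; pose proof (Hf J4) as H4.
    rewrite Im_plus in H1, H2, H3, H4. rewrite !Im_plus. lra.
  - match goal with |- Im ?z = 0 => replace z with
      ((a (Lp J1) * snd (Wk lam sig mu r (Lp J1) t x) + a (Lm J1) * snd (Wk lam sig mu r (Lm J1) t x))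
     + (a (Lp J2) * snd (Wk lam sig mu r (Lp J2) t x) + a (Lm J2) * snd (Wk lam sig mu r (Lm J2) t x))
     + (a (Lp J3) * snd (Wk lam sig mu r (Lp J3) t x) + a (Lm J3) * snd (Wk lam sig mu r (Lm J3) t x))
     + (a (Lp J4) * snd (Wk lam sig mu r (Lp J4) t x) + a (Lm J4) * snd (Wk lam sig mu r (Lm J4) t x)))%C by ring end.
    pose proof (Hs J1) as H1; pose proof (Hs J2) as H2; pose proof (Hs J3) as H3; pose proof (Hs J4) as H4.
    rewrite Im_plus in H1, H2, H3, H4. rewrite !Im_plus. lra.
Qed.

Lemma cot_pt : forall lam sig mu r k t x,
  cotimes0 (Wk lam sig mu r k t x) (Wk lam sig mu r (lneg k) t x) =
  CMscale (eta lam sig mu r k t x * eta lam sig mu r k t x)%C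
          (CM_of_RM (rotimes0 (perp (vec k)) (perp (vec k)))).
Proof.
  intros lam sig mu r k t x.
  unfold Wk, bk. cbv zeta.
  assert (He : eta lam sig mu r (lneg k) t x = eta lam sig mu r k t x) by (destruct k; reflexivity).
  rewrite He.
  set (E := eta lam sig mu r k t x).
  set (u := cexpi (lam * dot (vec k) x)).
  set (v := cexpi (lam * dot (vec (lneg k)) x)).
  assert (Huv : (u * v)%C = RtoC 1).
  { unfold u, v. rewrite cexpi_add. rewrite <- cexpi_0. f_equal.
    destruct k; unfold vec, dot, lneg; simpl; ring. }
  assert (Hii : (Ci * Ci)%C = RtoC (-1)).
  { unfold Ci, Cmult, RtoC. apply injective_projections; simpl; ring. }
  assert (Hm : forall X Y, ((E * (Ci * X * u)) * (E * (Ci * Y * v)))%C = (- (E * E * X * Y))%C).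
  { intros. transitivity (E * E * X * Y * ((Ci * Ci) * (u * v)))%C; [ring | rewrite Hii, Huv].
    unfold RtoC. apply injective_projections; simpl; ring. }
  assert (Hneg : perp (vec (lneg k)) = (- fst (perp (vec k)), - snd (perp (vec k)))).
  { destruct k; unfold perp, vec, lneg; simpl; f_equal; ring. }
  unfold cotimes0, cdot. cbn [fst snd]. rewrite !Hm. rewrite Hneg.
  destruct (perp (vec k)) as [a b]. cbn [fst snd].
  unfold CMscale, CM_of_RM, rotimes0, dot. cbn [r11 r12 r21 r22 fst snd c11 c12 c21 c22].
  destruct E as [e1 e2].
  f_equal; unfold RtoC, Cmult, Cplus, Cminus, Copp, Cinv; apply injective_projections; simpl; field.
Qed.

Definition kj (k : Lam) : P4 := match k with Lp j => j | Lm j => j end.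

Lemma eta_form : forall lam sig mu r k t x1 x2,
  eta lam sig mu r k t (x1, x2) =
  Dirichlet r ((lam * sig * (fst (vecP (kj k)) * x1 + snd (vecP (kj k)) * x2 + mu * t))%R,
               (lam * sig * (- snd (vecP (kj k)) * x1 + fst (vecP (kj k)) * x2))%R).
Proof. intros. destruct k; reflexivity. Qed.

Lemma vecP_int : forall j, exists P Q : Z, fst (vecP j) = IZR P / 5 /\ snd (vecP j) = IZR Q / 5.
Proof.
  intros j; destruct j; simpl.
  - exists 3%Z, 4%Z. split; field.
  - exists 3%Z, (-4)%Z. split; lra.
  - exists 4%Z, 3%Z. split; field.
  - exists 4%Z, (-3)%Z. split; lra.
Qed.

Lemma vecP_unit : forall j, fst (vecP j) * fst (vecP j) + snd (vecP j) * snd (vecP j) = 1.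
Proof. intros j; destruct j; simpl; field. Qed.

Lemma avg_k : forall lam sig mu r (m0 : nat) k t,
  lam * sig = 5 * INR m0 -> lam * sig <> 0 ->
  avgT2 (fun x => cotimes0 (Wk lam sig mu r k t x) (Wk lam sig mu r (lneg k) t x)) =
  CM_of_RM (rotimes0 (perp (vec k)) (perp (vec k))).
Proof.
  intros lam sig mu r m0 k t Hs Hs0.
  set (M := rotimes0 (perp (vec k)) (perp (vec k))).
  destruct (vecP_int (kj k)) as [P [Q [HP HQ]]].
  assert (Hent : forall (proj : CMat -> C) (pr : RMat -> R),
     (forall c A, proj (CMscale c (CM_of_RM A)) = (c * RtoC (pr A))%C) ->
     CInt2 (fun x1 x2 => proj (cotimes0 (Wk lam sig mu r k t (x1, x2)) (Wk lam sig mu r (lneg k) t (x1, x2))))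
     = (RtoC (2 * PI * (2 * PI)) * RtoC (pr M))%C).
  { intros proj pr Hpr. apply has2_CInt2.
    eapply has2_ext; [intros x1 x2; rewrite cot_pt, Hpr, eta_form; reflexivity |].
    apply (eta2_has2 r (lam * sig) mu t _ _ P Q m0); auto. apply vecP_unit. }
  unfold avgT2.
  rewrite (Hent c11 r11) by reflexivity.
  rewrite (Hent c12 r12) by reflexivity.
  rewrite (Hent c21 r21) by reflexivity.
  rewrite (Hent c22 r22) by reflexivity.
  unfold CMscale, CM_of_RM. cbn [c11 c12 c21 c22].
  assert (HP0 : 2 * PI * (2 * PI) <> 0) by (generalize PI_RGT_0; nra).
  f_equal; rewrite Cmult_assoc, <- RtoC_mult, Rinv_l by exact HP0;
    unfold RtoC, Cmult; apply injective_projections; simpl; ring.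
Qed.


Lemma CM_RM_sum : forall {A} (f : A -> RMat) l, CM_of_RM (RMsum f l) = CMsum (fun k => CM_of_RM (f k)) l.
Proof.
  induction l as [|a l IH]; simpl.
  - reflexivity.
  - rewrite <- IH. unfold CM_of_RM, CMadd, RMadd. simpl. rewrite !RtoC_plus. reflexivity.
Qed.

Lemma RMopp_sum : forall {A} (f : A -> RMat) l, RMopp (RMsum f l) = RMsum (fun k => RMopp (f k)) l.
Proof.
  induction l as [|a l IH]; simpl.
  - unfold RMopp, RMscale, RMat0; simpl. f_equal; ring.
  - rewrite <- IH. unfold RMopp, RMscale, RMadd. simpl. f_equal; ring.
Qed.

Lemma per_k : forall (c : R) (v : R * R), fst v * fst v + snd v * snd v = 1 ->
  CMscale (RtoC c) (CM_of_RM (rotimes0 (perp v) (perp v))) = CM_of_RM (RMopp (RMscale c (rotimes0 v v))).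
Proof.
  intros c [a b] H. simpl in H.
  unfold CMscale, CM_of_RM, RMopp, RMscale, rotimes0, perp, dot. cbn [fst snd r11 r12 r21 r22 c11 c12 c21 c22].
  f_equal; rewrite <- RtoC_mult; f_equal; nra.
Qed.

Lemma vec_unit : forall k, fst (vec k) * fst (vec k) + snd (vec k) * snd (vec k) = 1.
Proof. intros [j|j]; simpl; rewrite <- (vecP_unit j); ring. Qed.

Lemma key_sum : forall g : Lam -> R,
  CMsum (fun k => CMscale (RtoC (g k)) (CM_of_RM (rotimes0 (perp (vec k)) (perp (vec k))))) all_Lam =
  CM_of_RM (RMopp (RMsum (fun k => RMscale (g k) (rotimes0 (vec k) (vec k))) all_Lam)).
Proof.
  intros g. rewrite RMopp_sum, CM_RM_sum. f_equal. extensionality k. apply per_k. apply vec_unit.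
Qed.

Theorem lemma4p2
  (lam : R) (r : nat) (mu sig : R)
  (Hlam : exists m : nat, (0 < m)%nat /\ lam = 5 * INR m)
  (Hr : (0 < r)%nat)
  (Hmu : 0 < mu) (Hsig : 0 < sig)
  (Hlamsig : exists m : nat, lam * sig = 5 * INR m)
  (gamma : Lam -> RMat -> R)
  (Hgpos : forall k A, tracefree_sym A -> 0 < gamma k A)
  (Hgsmooth : forall k, smooth2 (fun a b => gamma k (tfs_of a b)))
  (Hgsym : forall k A, tracefree_sym A -> gamma (lneg k) A = gamma k A)
  (Hgdec : forall A, tracefree_sym A ->
     A = RMsum (fun k => RMscale (gamma k A ^ 2) (rotimes0 (vec k) (vec k))) all_Lam) :
  (forall a : Lam -> C, (forall k, a (lneg k) = Cconj (a k)) ->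
     forall t x, Im (fst (Wsum a lam sig mu r t x)) = 0 /\
                 Im (snd (Wsum a lam sig mu r t x)) = 0) /\
  (forall A, tracefree_sym A -> forall t,
     CMsum (fun k => CMscale (RtoC (gamma k A ^ 2))
              (avgT2 (fun x => cotimes0 (Wk lam sig mu r k t x) (Wk lam sig mu r (lneg k) t x))))
           all_Lam
     = CM_of_RM (RMopp A)).
Proof.
  split.
  { intros a Ha t x. apply part1; auto. }
  intros A HA t.
  destruct Hlamsig as [m0 Hm0].
  assert (Hs0 : lam * sig <> 0).
  { destruct Hlam as [m [Hm Hl]]. assert (0 < lam) by (rewrite Hl; apply lt_0_INR in Hm; lra).
    nra. }
  transitivity (CMsum (fun k => CMscale (RtoC (gamma k A ^ 2)) (CM_of_RM (rotimes0 (perp (vec k)) (perp (vec k))))) all_Lam).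
  { f_equal. extensionality k. rewrite (avg_k lam sig mu r m0 k t); auto. }
  transitivity (CM_of_RM (RMopp (RMsum (fun k => RMscale (gamma k A ^ 2) (rotimes0 (vec k) (vec k))) all_Lam))).
  2:{ rewrite <- (Hgdec A HA). reflexivity. }
  apply (key_sum (fun k => gamma k A ^ 2)).
Qed.
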